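(* Let $K$ be a nonempty compact subset of $\mathbb R^d$. For every $t>\underline{\dim}_B(K)$ and every $\alpha>0$ there exist $\mu\in\mathcal P(K)$ and $r\in(0,\alpha)$ such that $\mu(B(x,r))\ge2^{-t}r^t$ for all $x\in K$.
   Context: $\mathcal P(K)$ is the set of Borel probability measures on $K$, $B(x,r)$ the open ball, and $\underline{\dim}_B$ the lower box dimension. *)

(* Defs.v *)
From HB Require Import structures.
From mathcomp Require Import all_boot all_order all_algebra.
From mathcomp Require Import all_classical all_reals all_analysis.
Set Implicit Arguments. Unset Strict Implicit. Unset Printing Implicit Defensive.
Import Order.TTheory GRing.Theory Num.Theory.
Import numFieldNormedType.Exports.
Local Open Scope classical_set_scope.
Local Open Scope ring_scope.

Section Defs.
Variables (R : realType) (d : nat).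

(* Points of R^d are row vectors 'rV[R]_d; the topology on 'rV[R]_d is the
   product topology, which coincides with the Euclidean one. *)

Definition edist (x y : 'rV[R]_d) : R :=
  Num.sqrt (\sum_(i < d) (x ord0 i - y ord0 i) ^+ 2).

Definition oball (x : 'rV[R]_d) (r : R) : set 'rV[R]_d :=
  [set y | edist x y < r].

Definition cball (x : 'rV[R]_d) (r : R) : set 'rV[R]_d :=
  [set y | edist x y <= r].

Definition coverable (K : set 'rV[R]_d) (r : R) (n : nat) : Prop :=
  exists s : seq 'rV[R]_d, size s = n /\
    K `<=` \bigcup_(c in [set` s]) cball c r.

(* N_r(K): the smallest number of closed balls of radius r covering K
   (0 by convention if no finite cover exists, which never happens for
   compact K and r > 0). *)
Definition Ncov (K : set 'rV[R]_d) (r : R) : nat :=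
  match pselect (exists n, `[< coverable K r n >]) with
  | left h => ex_minn h
  | right _ => 0%N
  end.

(* Lower box dimension:  liminf_{r -> 0+} log N_r(K) / (- log r),
   written as sup_{0<delta<1} inf_{0<r<delta} of the ratio. *)
Definition lower_box_dim (K : set 'rV[R]_d) : \bar R :=
  ereal_sup [set ereal_inf
      [set ((ln (Ncov K r)%:R / - ln r)%:E) | r in `]0, delta[%classic]
    | delta in `]0, 1[%classic].

Definition borelRd : Type := g_sigma_algebraType (@open 'rV[R]_d).

End Defs.

(* Main.v *)
From Pilot Require Import Defs.
From HB Require Import structures.
From mathcomp Require Import all_boot all_order all_algebra.
From mathcomp Require Import all_classical all_reals all_analysis.
From mathcomp Require Import ring lra.
Import Order.TTheory GRing.Theory Num.Theory.
Import numFieldNormedType.Exports.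
Local Open Scope classical_set_scope.
Local Open Scope ring_scope.

Section CS.
Variables (R : realType) (d : nat).
Implicit Types a b : 'I_d -> R.

Lemma sumsq0 a : \sum_i a i ^+ 2 = 0 -> forall i, a i = 0.
Proof.
move=> h i; have := (psumr_eq0P (P:=predT) (F:= fun i => a i ^+ 2)).
move=> /(_ (fun i _ => sqr_ge0 (a i))) /(_ h) /(_ i isT) /eqP.
by rewrite sqrf_eq0 => /eqP.
Qed.

Lemma CS a b : \sum_i a i * b i <= Num.sqrt (\sum_i a i ^+ 2) * Num.sqrt (\sum_i b i ^+ 2).
Proof.
set SA := \sum_i a i ^+ 2; set SB := \sum_i b i ^+ 2.
have SA0 : 0 <= SA by apply: sumr_ge0 => i _; exact: sqr_ge0.
have SB0 : 0 <= SB by apply: sumr_ge0 => i _; exact: sqr_ge0.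
set A := Num.sqrt SA; set B := Num.sqrt SB.
have A0 : 0 <= A by apply: sqrtr_ge0.
have B0 : 0 <= B by apply: sqrtr_ge0.
have [Az|Ap] := eqVneq A 0.
  have : SA = 0 by rewrite -(sqr_sqrtr SA0) -/A Az expr0n.
  move/sumsq0 => ha; rewrite big1 ?Az ?mul0r // => i _; by rewrite ha mul0r.
have [Bz|Bp] := eqVneq B 0.
  have : SB = 0 by rewrite -(sqr_sqrtr SB0) -/B Bz expr0n.
  move/sumsq0 => hb; rewrite big1 ?Bz ?mulr0 // => i _; by rewrite hb mulr0.
have ABp : 0 < A * B by rewrite mulr_gt0 // lt0r ?Ap ?Bp.
have key : 0 <= \sum_i (B * a i - A * b i) ^+ 2 by apply: sumr_ge0 => i _; exact: sqr_ge0.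
have E : \sum_i (B * a i - A * b i) ^+ 2 = B ^+ 2 * SA - 2 * (A * B) * \sum_i a i * b i + A ^+ 2 * SB.
  rewrite /SA /SB !mulr_sumr -sumrN -!big_split /=.
  by apply: eq_bigr => i _; ring.
rewrite E /A /B !sqr_sqrtr // in key.
rewrite /A /B in ABp *.
have : 2 * (A * B) * \sum_i a i * b i <= 2 * (A * B) * (A * B).
  have -> : 2 * (A * B) * (A * B) = SB * SA + SA * SB.
    by rewrite /A /B -mulrA -expr2 exprMn !sqr_sqrtr //; ring.
  rewrite /A /B; lra.
rewrite ler_pM2l //; by rewrite mulr_gt0 // lt0r ?Ap ?Bp.
Qed.

Lemma tri a b : Num.sqrt (\sum_i (a i + b i) ^+ 2) <= Num.sqrt (\sum_i a i ^+ 2) + Num.sqrt (\sum_i b i ^+ 2).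
Proof.
have SA0 : 0 <= \sum_i a i ^+ 2 by apply: sumr_ge0 => i _; exact: sqr_ge0.
have SB0 : 0 <= \sum_i b i ^+ 2 by apply: sumr_ge0 => i _; exact: sqr_ge0.
set A := Num.sqrt (\sum_i a i ^+ 2); set B := Num.sqrt (\sum_i b i ^+ 2).
have AB0 : 0 <= A + B by rewrite addr_ge0 // sqrtr_ge0.
rewrite -[X in _ <= X](ger0_norm AB0) -sqrtr_sqr.
rewrite ler_sqrt; last by rewrite sqr_ge0.
rewrite /A /B.
have := CS a b.
have -> : \sum_i (a i + b i) ^+ 2 = \sum_i a i ^+ 2 + 2 * \sum_i a i * b i + \sum_i b i ^+ 2.
  rewrite mulr_sumr -!big_split /=; apply: eq_bigr => i _; ring.
rewrite sqrrD !sqr_sqrtr //. lra.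
Qed.
End CS.

Section G.
Variables (R : realType) (d : nat).
Implicit Types x y : 'rV[R]_d.
Local Notation ed := (@Pilot.Defs.edist R d).

Lemma ball_edist x y r : 0 < r -> ball x (r / (d%:R + 1)) y -> ed x y < r.
Proof.
move=> r0 B.
set e := r / (d%:R + 1).
have d1 : 0 < d%:R + 1 :> R by rewrite ltr_wpDl.
have e0 : 0 < e by rewrite divr_gt0.
have er : e * (d%:R + 1) = r by rewrite /e divfK // gt_eqF.
have H : forall i, (x ord0 i - y ord0 i) ^+ 2 <= e ^+ 2.
  move=> i; move: B => [_ /(_ ord0 i)].
  rewrite -ball_normE /ball_ /= -/e => h.
  have := h; rewrite ltr_norml => /andP[h1 h2]; nra.
rewrite /Pilot.Defs.edist.
have S0 : 0 <= \sum_(i < d) (x ord0 i - y ord0 i) ^+ 2.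
  by apply: sumr_ge0 => i _; exact: sqr_ge0.
have S1 : \sum_(i < d) (x ord0 i - y ord0 i) ^+ 2 <= d%:R * e ^+ 2.
  apply: le_trans (ler_sum _ (fun i _ => H i)) _.
  by rewrite sumr_const card_ord mulr_natl.
have S2 : d%:R * e ^+ 2 < r ^+ 2.
  have D0 : 0 <= d%:R :> R by [].
  rewrite -er; nra.
rewrite -[X in _ < X](@ger0_norm _ r) ?(ltW r0) // -sqrtr_sqr ltr_sqrt; last first.
  by rewrite exprn_gt0.
exact: le_lt_trans S1 S2.
Qed.

Lemma edist_sym x y : ed x y = ed y x.
Proof.
rewrite /Pilot.Defs.edist; congr Num.sqrt; apply: eq_bigr => i _.
by rewrite -sqrrN opprB.
Qed.

Lemma edist_tri x y z : ed x z <= ed x y + ed y z.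
Proof.
rewrite /Pilot.Defs.edist.
rewrite (_ : \sum_(i < d) (x ord0 i - z ord0 i) ^+ 2 =
   \sum_(i < d) ((x ord0 i - y ord0 i) + (y ord0 i - z ord0 i)) ^+ 2); last first.
  by apply: eq_bigr => i _; rewrite addrA subrK.
exact: (@tri _ _ (fun i => x ord0 i - y ord0 i) (fun i => y ord0 i - z ord0 i)).
Qed.

Lemma cover_exists (K : set 'rV[R]_d) r : compact K -> 0 < r -> exists n, coverable K r n.
Proof.
move=> Kc r0.
set e := r / (d%:R + 1).
have d1 : 0 < d%:R + 1 :> R by rewrite ltr_wpDl.
have e0 : 0 < e by rewrite divr_gt0.
move: Kc; rewrite compact_cover => /(_ _ K (fun c => ball c e)).
case.
- by move=> c _; exact: ball_open.
- by move=> x Kx; exists x => //; exact: ballxx.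
move=> D' _ cov; exists (size (finmap.enum_fset D')), (finmap.enum_fset D'); split => //.
move=> x /cov [c Dc bc]; exists c => //.
by rewrite /Pilot.Defs.cball /=; apply: ltW; exact: ball_edist.
Qed.

Lemma Ncov_spec (K : set 'rV[R]_d) r : K !=set0 -> compact K -> 0 < r ->
  coverable K r (Ncov K r) /\ (0 < Ncov K r)%N.
Proof.
move=> [k Kk] Kc r0; rewrite /Ncov; case: pselect => [h|h]; last first.
  exfalso; apply: h; have [n cn] := cover_exists K r Kc r0; exists n; exact/asboolP.
case: ex_minnP => m /asboolP cm _; split => //.
rewrite lt0n; apply/negP => /eqP m0; move: cm; rewrite m0 => -[s [/size0nil -> cov]].
by have [c] := cov k Kk.
Qed.
End G.

Section U.
Variables (R : realType) (d : nat) (k0 : 'rV[R]_d) (ks : seq 'rV[R]_d).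
Local Notation T := (borelRd R d).
Local Notation L := (k0 :: ks).
Definition cN : {nonneg R} := ((size L)%:R^-1)%:nng.
Definition unifm := mscale cN (msum (fun i => (@dirac _ T (nth k0 L i) R)) (size L)).
Lemma unifmE A : unifm A = ((cN%:num)%:E * \sum_(k < size L) (@dirac _ T (nth k0 L k) R A))%E.
Proof. by []. Qed.
Let unifm_setT : unifm setT = 1%E.
Proof.
rewrite unifmE.
under eq_bigr do rewrite diracE in_setT.
rewrite sumEFin sumr_const card_ord -EFinM /cN /=.
by rewrite mulr1n mulVf // pnatr_eq0.
Qed.
HB.instance Definition _ := Measure.copy unifm (mscale cN (msum (fun i => (@dirac _ T (nth k0 L i) R)) (size L))).
HB.instance Definition _ := Measure_isProbability.Build _ _ R unifm unifm_setT.

Lemma unifm_out (A : set T) : (forall y, y \in L -> ~ A y) -> unifm A = 0%E.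
Proof.
move=> h; rewrite unifmE big1 ?mule0 // => i _.
by rewrite diracE memNset //; apply: h; exact: mem_nth.
Qed.

Lemma unifm_ge (A : set T) y : y \in L -> A y -> (((size L)%:R^-1)%:E <= unifm A)%E.
Proof.
move=> yL Ay; rewrite unifmE.
under eq_bigr do rewrite diracE.
rewrite sumEFin -EFinM lee_fin /cN /=.
rewrite -[X in X <= _]mulr1 ler_wpM2l // ?invr_ge0 //.
have jl : (index y L < size L)%N by rewrite index_mem.
rewrite (bigD1 (Ordinal jl)) //= nth_index //.
have -> : y \in A by exact: mem_set.
by rewrite ler_wpDr // sumr_ge0 // => i _; rewrite ler0n.
Qed.
End U.

Theorem lemma2p12 (R : realType) (d : nat) (K : set 'rV[R]_d)
  (K0 : K !=set0) (Kc : compact K)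
  (t : R) (ht : (lower_box_dim K < t%:E)%E) (alpha : R) (halpha : 0 < alpha) :
  exists (mu : probability (borelRd R d) R) (r : R),
    mu (~` K : set (borelRd R d)) = 0%E /\ 0 < r < alpha /\
    forall x : 'rV[R]_d, K x ->
      ((2 `^ (- t) * r `^ t)%:E <= mu (oball x r : set (borelRd R d)))%E.
Proof.
set delta := Num.min (alpha / 3) (1 / 2).
have dpos : 0 < delta by rewrite lt_min; apply/andP; split; lra.
have d1 : delta < 1 by rewrite gt_min; apply/orP; right; lra.
have da : delta <= alpha / 3 by rewrite ge_min lexx.
have hinf : (ereal_inf [set ((ln (Ncov K r)%:R / - ln r)%:E) | r in `]0, delta[%classic]
    <= lower_box_dim K)%O.
  apply: ereal_sup_ubound; exists delta => //=.
  by rewrite in_itv /= dpos d1.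
have [y [r rI <-] yt] := ereal_inf_lt (le_lt_trans hinf ht).
rewrite lte_fin in yt.
move: rI; rewrite /= in_itv /= => /andP[r0 rd].
have [[s [sN cov]] N0] := @Ncov_spec _ _ K r K0 Kc r0.
set N := Ncov K r in sN N0 yt.
have r1 : r < 1 by apply: lt_trans rd d1.
have lr : ln r < 0 by apply: ln_lt0; rewrite r0 r1.
have N1 : 1 <= N%:R :> R by rewrite ler1n.
have lnN0 : 0 <= ln (N%:R : R) := ln_ge0 N1.
have key : ln N%:R < t * - ln r by rewrite -ltr_pdivrMr // oppr_gt0.
have t0 : 0 < t by nra.
have Npos : 0 < N%:R :> R by rewrite ltr0n.
have rt0 : 0 < r `^ t by apply: powR_gt0.
have Nr : N%:R * r `^ t < 1.
  rewrite -ltr_ln ?posrE ?mulr_gt0 // ln1 lnM ?posrE // ln_powR; lra.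
have rtN : r `^ t < N%:R^-1.
  by rewrite -[_^-1]mul1r ltr_pdivlMr // mulrC.
set sr := (N%:R^-1) `^ t^-1.
have st : sr `^ t = N%:R^-1.
  by rewrite /sr -powRrM mulVf ?gt_eqF // powRr1 // invr_ge0 ltW.
have sr0 : 0 <= sr by apply: powR_ge0.
have rs : r < sr.
  rewrite ltNge; apply/negP => sr_r.
  have := ge0_ler_powR (ltW t0) sr0 (ltW r0) sr_r; rewrite st => h.
  by have := lt_le_trans rtN h; rewrite ltxx.
set m := Num.min sr (3 / 2 * r).
have rm : r < m by rewrite lt_min rs /=; lra.
have m0 : 0 < m by apply: lt_trans rm.
have m32 : m <= 3 / 2 * r by rewrite ge_min lexx orbT.
have ms : m <= sr by rewrite ge_min lexx.
case: K0 => k Kk.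
pose f c := xget k (K `&` cball c r).
have fK c : K (f c).
  rewrite /f; case: xgetP => [z _ [Kz _] // | _]; exact: Kk.
case: s sN cov => [|c0 s'] sN cov; first by move: N0; rewrite -sN.
exists (@unifm _ _ (f c0) (map f s')), (2 * m).
split; last split.
- apply: unifm_out => z; rewrite -map_cons => /mapP [c _ ->].
  by move=> /=; apply; apply: fK.
- apply/andP; split; first by rewrite mulr_gt0.
  lra.
move=> x Kx.
rewrite powRM ?ler0n ?(ltW m0) // mulrA -powRD; last by rewrite pnatr_eq0 implybT.
rewrite addNr powRr0 mul1r.
have [c cs xc] := cov x Kx.
apply: (@le_trans _ _ ((size (f c0 :: map f s'))%:R^-1)%:E).
  rewrite /= size_map -[(size s').+1]/(size (c0 :: s')) sN lee_fin -st.
  have := @ge0_ler_powR _ t (ltW t0) m sr; rewrite !nnegrE; apply => //; exact: ltW.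
apply: (@unifm_ge _ _ _ _ _ (f c)).
  by rewrite -map_cons; apply: map_f.
have fc : (K `&` cball c r) (f c) by apply: xgetPex; exists x.
rewrite /oball /=.
apply: (le_lt_trans (@edist_tri _ _ x c (f c))).
rewrite (@edist_sym _ _ x c).
move: xc fc; rewrite /cball /= => xc [_ fc].
lra.
Qed.
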